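(* If $\Phi$ is a set of modal formulas such that $\mathbf{K}+\Phi=\mathrm{Log}_{>1}(\mathbb{R})$, then infinitely many distinct propositional variables occur in the formulas of $\Phi$. Consequently, $\mathrm{Log}_{>1}(\mathbb{R})$ is not finitely axiomatizable.
   Context: Modal formulas are built from a countable set of propositional variables using $\bot$, $\to$ and one unary modality $\lozenge$. $\mathrm{Log}_{>1}(\mathbb{R})$ is the set of formulas valid (true at every point under every valuation) in the frame $(\mathbb{R},R_{>1})$, where $xR_{>1}y$ iff $|x-y|>1$ and $x\models\lozenge\varphi$ iff some $y$ with $xR_{>1}y$ satisfies $\varphi$. A normal modal logic is a set of formulas containing all classical tautologies, $\neg\lozenge\bot$ and $\lozenge(p\vee q)\to\lozenge p\vee\lozenge q$, closed under modus ponens, uniform substitution, and the rule: from $\varphi\to\psi$ infer $\lozenge\varphi\to\lozenge\psi$. $\mathbf{K}+\Phi$ is the smallest normal modal logic containing $\Phi$. A logic is finitely axiomatizable if it equals $\mathbf{K}+\Phi$ for some finite $\Phi$. *)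

(* Defs.v *)
From Stdlib Require Import Reals List.
Open Scope R_scope.

Inductive form : Type :=
| Var : nat -> form
| Bot : form
| Imp : form -> form -> form
| Dia : form -> form.

Definition Neg (a : form) : form := Imp a Bot.
Definition Or (a b : form) : form := Imp (Neg a) b.

Fixpoint occurs (n : nat) (f : form) : Prop :=
  match f with
  | Var m => m = n
  | Bot => False
  | Imp a b => occurs n a \/ occurs n b
  | Dia a => occurs n a
  end.

Fixpoint subst (s : nat -> form) (f : form) : form :=
  match f with
  | Var m => s m
  | Bot => Bot
  | Imp a b => Imp (subst s a) (subst s b)
  | Dia a => Dia (subst s a)
  end.

(* Classical (boolean) evaluation, treating formulas Dia a as atoms. *)
Fixpoint beval (v : nat -> bool) (d : form -> bool) (f : form) : bool :=
  match f with
  | Var m => v m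
  | Bot => false
  | Imp a b => orb (negb (beval v d a)) (beval v d b)
  | Dia a => d a
  end.

Definition tautology (f : form) : Prop :=
  forall v d, beval v d f = true.

Inductive KPlus (Phi : form -> Prop) : form -> Prop :=
| KP_ax : forall f, Phi f -> KPlus Phi f
| KP_taut : forall f, tautology f -> KPlus Phi f
| KP_diabot : KPlus Phi (Neg (Dia Bot))
| KP_K : KPlus Phi (Imp (Dia (Or (Var 0) (Var 1))) (Or (Dia (Var 0)) (Dia (Var 1))))
| KP_mp : forall f g, KPlus Phi (Imp f g) -> KPlus Phi f -> KPlus Phi g
| KP_subst : forall s f, KPlus Phi f -> KPlus Phi (subst s f)
| KP_mono : forall f g, KPlus Phi (Imp f g) -> KPlus Phi (Imp (Dia f) (Dia g)).

Definition Rgt1 (x y : R) : Prop := Rabs (x - y) > 1.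

Fixpoint sat (V : nat -> R -> Prop) (x : R) (f : form) : Prop :=
  match f with
  | Var m => V m x
  | Bot => False
  | Imp a b => sat V x a -> sat V x b
  | Dia a => exists y, Rgt1 x y /\ sat V y a
  end.

Definition LogR (f : form) : Prop := forall V x, sat V x f.

Definition infinitely_many_vars (Phi : form -> Prop) : Prop :=
  ~ exists N : nat, forall n, (exists f, Phi f /\ occurs n f) -> (n < N)%nat.

Definition finitely_axiomatizable (L : form -> Prop) : Prop :=
  exists l : list form, forall f, KPlus (fun g => In g l) f <-> L f.

(* Main.v *)
Require Import Defs.
From Stdlib Require Import Reals List Lra Lia Classical ClassicalEpsilon.
Open Scope R_scope.

Fixpoint satK {W : Type} (Rel : W -> W -> Prop) (V : nat -> W -> Prop) (w : W) (f : form) : Prop :=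
  match f with
  | Var m => V m w
  | Bot => False
  | Imp a b => satK Rel V w a -> satK Rel V w b
  | Dia a => exists w', Rel w w' /\ satK Rel V w' a
  end.

Lemma sat_satK : forall f V x, sat V x f <-> satK Rgt1 V x f.
Proof.
  induction f; intros V x; simpl; try tauto.
  - rewrite IHf1, IHf2. tauto.
  - split; intros [y [H1 H2]]; exists y; split; auto; apply IHf; auto.
Qed.

Lemma satK_subst : forall {W} (Rel : W -> W -> Prop) s f V w,
  satK Rel V w (subst s f) <-> satK Rel (fun n u => satK Rel V u (s n)) w f.
Proof.
  intros W Rel s f; induction f; intros V w; simpl; try tauto.
  - rewrite IHf1, IHf2. tauto.
  - split; intros [y [H1 H2]]; exists y; split; auto; apply IHf; auto.
Qed.

Definition bdec (P : Prop) : bool := if excluded_middle_informative P then true else false.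
Lemma bdec_spec : forall P, bdec P = true <-> P.
Proof. intros P; unfold bdec; destruct (excluded_middle_informative P); split; intros; auto; congruence. Qed.

Lemma beval_satK : forall {W} (Rel : W -> W -> Prop) V w f,
  beval (fun n => bdec (V n w)) (fun a => bdec (satK Rel V w (Dia a))) f = true <-> satK Rel V w f.
Proof.
  intros W Rel V w f; induction f; simpl.
  - apply bdec_spec.
  - split; [discriminate | tauto].
  - destruct (beval _ _ f1) eqn:E1, (beval _ _ f2) eqn:E2; simpl; split; intros H; try tauto; try discriminate.
    all: first [ apply IHf2; reflexivity
               | exfalso; assert (false = true) by (apply IHf2; apply H; apply IHf1; reflexivity); discriminate
               | exfalso; assert (false = true) by (apply IHf1; assumption); discriminate
               | idtac ].
  - rewrite bdec_spec. simpl. tauto.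
Qed.

Lemma taut_satK : forall {W} (Rel : W -> W -> Prop) V w f, tautology f -> satK Rel V w f.
Proof. intros. apply beval_satK. apply H. Qed.

Definition RelK (k : nat) (w w' : nat) : Prop := w <> w' /\ (w' < k)%nat.

Lemma sound_K : forall (Phi : form -> Prop) k,
  (forall f, Phi f -> forall V w, (w < k)%nat -> satK (RelK k) V w f) ->
  forall f, KPlus Phi f -> forall V w, (w < k)%nat -> satK (RelK k) V w f.
Proof.
  intros Phi k HPhi f Hd; induction Hd; intros V w Hw.
  - apply HPhi; auto.
  - apply taut_satK; auto.
  - simpl. intros [y [_ []]].
  - simpl. intros [y [HR H]] Hn. exists y. split; auto. apply H. intro. apply Hn. eauto.
  - simpl in IHHd1. apply IHHd1; auto.
  - apply satK_subst. apply IHHd; auto.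
  - simpl. intros [y [HR H]]. exists y. split; auto. simpl in IHHd. apply IHHd; auto. apply HR.
Qed.


Lemma pigeon : forall n (Rel : nat -> nat -> Prop),
  (forall j, (j <= n)%nat -> exists i, (i < n)%nat /\ Rel j i) ->
  exists j1 j2 i, (j1 < j2)%nat /\ (j2 <= n)%nat /\ Rel j1 i /\ Rel j2 i.
Proof.
  induction n; intros Rel H.
  - destruct (H 0%nat (le_n 0)) as [i [Hi _]]. lia.
  - destruct (H (S n) (le_n _)) as [i0 [Hi0 Hr0]].
    destruct (classic (exists j, (j < S n)%nat /\ Rel j i0)) as [[j [Hj Hrj]] | Hno].
    + exists j, (S n), i0. repeat split; auto; lia.
    + set (Rel' := fun j i => (i < n)%nat /\ (Rel j i \/ (i = i0 /\ Rel j n))).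
      destruct (IHn Rel') as [j1 [j2 [i [Hlt [Hle [[Hi1 H1] [Hi2 H2]]]]]]].
      * intros j Hj. destruct (H j ltac:(lia)) as [i [Hi Hr]].
        assert (i <> i0) by (intro; subst; apply Hno; exists j; split; [lia|auto]).
        destruct (Nat.eq_dec i n).
        -- subst. exists i0. split; [lia|]. unfold Rel'; cbv beta. split; [lia|]. right; auto.
        -- exists i. split; [lia|]. unfold Rel'; cbv beta. split; [lia|]. left; auto.
      * destruct H1 as [H1 | [E1 H1]]; destruct H2 as [H2 | [E2 H2]].
        -- exists j1, j2, i. repeat split; auto; lia.
        -- subst. exfalso. apply Hno. exists j1. split; [lia|auto].
        -- subst. exfalso. apply Hno. exists j2. split; [lia|auto].
        -- exists j1, j2, n. repeat split; auto; lia.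
Qed.

Lemma color_pigeon : forall N (V : nat -> nat -> Prop) (pts : list nat),
  NoDup pts -> (2 ^ N < length pts)%nat ->
  exists a b, In a pts /\ In b pts /\ a <> b /\ forall n, (n < N)%nat -> (V n a <-> V n b).
Proof.
  induction N; intros V pts Hnd Hlen.
  - destruct pts as [|a [|b l]]; simpl in Hlen; try lia.
    exists a, b. inversion Hnd; subst. repeat split; simpl; auto.
    + intro; subst; apply H1; simpl; auto.
    + intros; lia.
    + intros; lia.
  - set (d := fun x => bdec (V N x)).
    set (l1 := filter d pts). set (l2 := filter (fun x => negb (d x)) pts).
    assert (Hl : (length l1 + length l2 = length pts)%nat).
    { unfold l1, l2. clear. induction pts; simpl; auto. destruct (d a); simpl; lia. }
    simpl in Hlen.
    assert (Hc : (2 ^ N < length l1 \/ 2 ^ N < length l2)%nat) by lia.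
    destruct Hc as [Hc | Hc].
    + destruct (IHN V l1 (NoDup_filter _ Hnd) Hc) as [a [b [Ha [Hb [Hab Hag]]]]].
      unfold l1 in Ha, Hb. apply filter_In in Ha, Hb.
      exists a, b. split; [tauto|]. split; [tauto|]. split; [auto|].
      intros m Hm. destruct (Nat.eq_dec m N).
      -- subst m. destruct Ha as [_ Ha]; destruct Hb as [_ Hb]. unfold d in Ha, Hb.
         rewrite <- (bdec_spec (V N a)), <- (bdec_spec (V N b)).
         destruct (bdec (V N a)); destruct (bdec (V N b)); try discriminate; split; auto.
      -- apply Hag; lia.
    + destruct (IHN V l2 (NoDup_filter _ Hnd) Hc) as [a [b [Ha [Hb [Hab Hag]]]]].
      unfold l2 in Ha, Hb. apply filter_In in Ha, Hb.
      exists a, b. split; [tauto|]. split; [tauto|]. split; [auto|].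
      intros m Hm. destruct (Nat.eq_dec m N).
      -- subst m. destruct Ha as [_ Ha]; destruct Hb as [_ Hb]. unfold d in Ha, Hb.
         rewrite <- (bdec_spec (V N a)), <- (bdec_spec (V N b)).
         destruct (bdec (V N a)); destruct (bdec (V N b)); try discriminate; split; auto.
      -- apply Hag; lia.
Qed.


Definition Box (f : form) : form := Neg (Dia (Neg f)).
Definition Aall (f : form) : form := Box (Box f).
Fixpoint bigOr (n : nat) : form :=
  match n with 0 => Bot | S m => Or (bigOr m) (Var m) end.
Definition cond (i : nat) : form := Imp (Var i) (Neg (Dia (Var i))).
Fixpoint chain (n : nat) : form :=
  match n with 0 => Bot | S m => Imp (Aall (cond m)) (chain m) end.
Definition theta (n : nat) : form := Imp (Aall (bigOr n)) (chain n).

Lemma Rgt1_r : forall a b, b - a > 1 -> Rgt1 a b.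
Proof. intros. unfold Rgt1. replace (a - b) with (-(b-a)) by ring. rewrite Rabs_Ropp.
  apply Rlt_le_trans with (b - a); [lra | apply RRle_abs]. Qed.
Lemma Rgt1_l : forall a b, a - b > 1 -> Rgt1 a b.
Proof. intros. unfold Rgt1. apply Rlt_le_trans with (a - b); [lra | apply RRle_abs]. Qed.
Lemma not_Rgt1 : forall a b, a - b <= 1 -> b - a <= 1 -> ~ Rgt1 a b.
Proof. intros. unfold Rgt1. apply Rle_not_lt. apply Rabs_le. lra. Qed.

Lemma Aall_R : forall V x f, satK Rgt1 V x (Aall f) -> forall z, satK Rgt1 V z f.
Proof.
  intros V x f H z. apply NNPP. intro Hn. simpl in H. apply H.
  exists (Rabs x + Rabs z + 2). split.
  - apply Rgt1_r. pose proof (RRle_abs x). pose proof (Rabs_pos z). lra.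
  - intro HB. apply HB. exists z. split; auto.
    apply Rgt1_l. pose proof (RRle_abs z). pose proof (Rabs_pos x). lra.
Qed.

Lemma Aall_intro : forall {W} (Rel : W -> W -> Prop) V (D : W -> Prop) x f,
  (forall y z, Rel y z -> D z) -> (forall z, D z -> satK Rel V z f) -> D x -> satK Rel V x (Aall f).
Proof.
  intros W Rel V D x f HD H Hx. simpl. intros [y [Hy H1]]. apply H1. intros [z [Hz H2]].
  apply H2. apply H. eapply HD; eauto.
Qed.

Lemma bigOr_elim : forall {W} (Rel : W -> W -> Prop) V z n,
  satK Rel V z (bigOr n) -> exists i, (i < n)%nat /\ V i z.
Proof.
  induction n; simpl; intros H; [destruct H|].
  destruct (classic (satK Rel V z (bigOr n))) as [Hb|Hb].
  - destruct (IHn Hb) as [i [Hi Hv]]. exists i; split; auto.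
  - exists n. split; auto.
Qed.

Lemma bigOr_intro : forall {W} (Rel : W -> W -> Prop) V z n i,
  (i < n)%nat -> V i z -> satK Rel V z (bigOr n).
Proof.
  induction n; intros i Hi Hv; [lia|]. simpl. intros Hn.
  destruct (Nat.eq_dec i n); [subst; auto|]. exfalso. apply Hn. apply (IHn i); auto. lia.
Qed.

Lemma chain_intro : forall {W} (Rel : W -> W -> Prop) V z n,
  ~ (forall i, (i < n)%nat -> satK Rel V z (Aall (cond i))) -> satK Rel V z (chain n).
Proof.
  induction n; intros H.
  - apply H. intros; lia.
  - intros Hc. apply IHn. intro Hall. apply H. intros i Hi.
    destruct (Nat.eq_dec i n); [subst; auto|]. apply Hall; lia.
Qed.

Lemma chain_elim : forall {W} (Rel : W -> W -> Prop) V z n,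
  (forall i, (i < n)%nat -> satK Rel V z (Aall (cond i))) -> ~ satK Rel V z (chain n).
Proof.
  induction n; intros H Hc; [exact Hc|].
  apply (IHn (fun i Hi => H i ltac:(lia))). exact (Hc (H n ltac:(lia))).
Qed.

Lemma theta_valid : forall n, LogR (theta n).
Proof.
  intros n V x. apply sat_satK. simpl. intros Hcov. apply chain_intro. intros Hall.
  pose proof (Aall_R _ _ _ Hcov) as Hc.
  destruct (pigeon n (fun j i => (i < n)%nat /\ V i (2 * INR j))) as [j1 [j2 [i [Hlt [Hle [[Hi H1] [_ H2]]]]]]].
  - intros j _. destruct (bigOr_elim _ _ _ _ (Hc (2 * INR j))) as [i [Hi Hv]]. exists i; auto.
  - pose proof (Aall_R _ _ _ (Hall i Hi) (2 * INR j1)) as Hci. simpl in Hci.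
    apply (Hci H1). exists (2 * INR j2). split; auto.
    apply Rgt1_r. assert (INR j1 + 1 <= INR j2).
    { rewrite <- S_INR. apply le_INR. lia. }
    lra.
Qed.


Definition inI (w : nat) (x : R) : Prop := 3 * INR w <= x <= 3 * INR w + 1.
Definition InA (k a b : nat) (x : R) : Prop :=
  forall u, (u < k)%nat -> u <> a -> u <> b -> ~ inI u x.
Definition Zr (k a b : nat) (x : R) (w : nat) : Prop :=
  ((w < k)%nat /\ w <> a /\ w <> b /\ inI w x) \/ ((w = a \/ w = b) /\ InA k a b x).

Lemma inI_uniq : forall u w x, inI u x -> inI w x -> u = w.
Proof.
  intros u w x [H1 H2] [H3 H4]. destruct (Nat.lt_total u w) as [H|[H|H]]; auto.
  - assert (INR u + 1 <= INR w) by (rewrite <- S_INR; apply le_INR; lia). lra.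
  - assert (INR w + 1 <= INR u) by (rewrite <- S_INR; apply le_INR; lia). lra.
Qed.

Lemma Zr_func : forall k a b x w w', Zr k a b x w -> Zr k a b x w' ->
  w = w' \/ ((w = a \/ w = b) /\ (w' = a \/ w' = b)).
Proof.
  intros k a b x w w' [[Hk [Ha [Hb Hi]]]|[Hab HA]] [[Hk' [Ha' [Hb' Hi']]]|[Hab' HA']].
  - left. eapply inI_uniq; eauto.
  - exfalso. apply (HA' w); auto.
  - exfalso. apply (HA w'); auto.
  - right. auto.
Qed.

Lemma Zr_lt : forall k a b x w, (a < k)%nat -> (b < k)%nat -> Zr k a b x w -> (w < k)%nat.
Proof. intros k a b x w Ha Hb [[H _]|[[->| ->] _]]; auto. Qed.

Lemma Zr_total : forall k a b x, exists w, Zr k a b x w.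
Proof.
  intros k a b x.
  destruct (classic (exists u, (u < k)%nat /\ u <> a /\ u <> b /\ inI u x)) as [[u Hu]|Hn].
  - exists u. left. auto.
  - exists a. right. split; auto. intros u H1 H2 H3 H4. apply Hn. exists u; auto.
Qed.

Definition bigpt (k : nat) (x : R) : R := Rabs x + 3 * INR k + 5.

Lemma bigpt_A : forall k a b x, InA k a b (bigpt k x).
Proof.
  intros k a b x u Hu _ _ [_ H]. unfold bigpt in H.
  assert (INR u < INR k) by (apply lt_INR; auto). pose proof (Rabs_pos x). lra.
Qed.

Lemma bigpt_far : forall k x, Rgt1 x (bigpt k x).
Proof.
  intros. apply Rgt1_r. unfold bigpt. pose proof (RRle_abs x). pose proof (pos_INR k). lra.
Qed.

Section Bisim.
Variables (N k a b : nat) (V : nat -> nat -> Prop).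
Hypotheses (Hak : (a < k)%nat) (Hbk : (b < k)%nat) (Hab : a <> b)
  (Hag : forall n, (n < N)%nat -> (V n a <-> V n b)).

Definition V' (n : nat) (x : R) : Prop := exists w, Zr k a b x w /\ V n w.

Lemma samecol : forall x w w' n, (n < N)%nat -> Zr k a b x w -> Zr k a b x w' -> (V n w <-> V n w').
Proof.
  intros x w w' n Hn H1 H2. destruct (Zr_func _ _ _ _ _ _ H1 H2) as [->|[[->| ->] [->| ->]]]; try tauto.
  - apply Hag; auto.
  - rewrite (Hag n Hn). tauto.
Qed.

Lemma bisim : forall f, (forall n, occurs n f -> (n < N)%nat) ->
  forall x w, Zr k a b x w -> (satK Rgt1 V' x f <-> satK (RelK k) V w f).
Proof.
  induction f; intros Hocc x w Hz; simpl.
  - assert (Hm : (n < N)%nat) by (apply Hocc; simpl; auto).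
    split.
    + intros [w0 [Hz0 Hv]]. apply (samecol x w0 w n Hm Hz0 Hz). auto.
    + intros Hv. exists w. auto.
  - tauto.
  - rewrite (IHf1 (fun n H => Hocc n (or_introl H)) x w Hz).
    rewrite (IHf2 (fun n H => Hocc n (or_intror H)) x w Hz). tauto.
  - split.
    + intros [x' [Hr Hs]].
      destruct (Zr_total k a b x') as [w0 Hz0].
      assert (exists w', w' <> w /\ Zr k a b x' w') as [w' [Hne Hz']].
      { destruct (Nat.eq_dec w0 w) as [->|Hne]; [|exists w0; auto].
        destruct Hz as [[Hk [Ha [Hb Hi]]]|[Hw HA]]; destruct Hz0 as [[Hk' [Ha' [Hb' Hi']]]|[Hw' HA']].
        - exfalso. destruct Hi, Hi'. apply (not_Rgt1 x x'); auto; lra.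
        - exfalso. destruct Hw'; auto.
        - exfalso. destruct Hw; auto.
        - destruct (Nat.eq_dec w a) as [->|Hwa].
          + exists b. split; auto. right. split; auto.
          + exists a. split; auto. right. split; auto. }
      exists w'. split.
      * split; [intro; subst; auto|]. apply (Zr_lt k a b x' w'); auto.
      * apply (proj1 (IHf Hocc x' w' Hz')). auto.
    + intros [w' [[Hne Hw'] Hs]].
      destruct (classic (w' = a \/ w' = b)) as [Hab'|Hab'].
      * exists (bigpt k x). split; [apply bigpt_far|].
        apply (proj2 (IHf Hocc _ w' (or_intror (conj Hab' (bigpt_A k a b x))))); auto.
      * assert (Hni : ~ inI w' x).
        { intro Hi. assert (Zr k a b x w') by (left; split; [auto|]; split; [intro; subst; auto|]; split; [intro; subst; auto|]; exact Hi).
          destruct (Zr_func _ _ _ _ _ _ Hz H) as [->|[_ H2]]; auto. }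
        assert (Hz' : forall y, inI w' y -> Zr k a b y w').
        { intros y Hy. left; split; [auto|]; split; [intro; subst; auto|]; split; [intro; subst; auto|]; exact Hy. }
        destruct (Rlt_or_le x (3 * INR w')) as [Hl|Hl].
        -- exists (3 * INR w' + 1). split; [apply Rgt1_r; lra|].
           apply (proj2 (IHf Hocc _ w' (Hz' (3 * INR w' + 1) ltac:(unfold inI; lra)))); auto.
        -- assert (3 * INR w' + 1 < x).
           { apply Rnot_le_lt. intro. apply Hni. unfold inI; lra. }
           exists (3 * INR w'). split; [apply Rgt1_l; lra|].
           apply (proj2 (IHf Hocc _ w' (Hz' (3 * INR w') ltac:(unfold inI; lra)))); auto.
Qed.

End Bisim.

Lemma K_valid : forall N f, LogR f -> (forall n, occurs n f -> (n < N)%nat) ->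
  forall V w, (w < 2 ^ N + 1)%nat -> satK (RelK (2 ^ N + 1)) V w f.
Proof.
  intros N f Hf Hocc V w Hw. set (k := (2 ^ N + 1)%nat) in *.
  destruct (color_pigeon N V (seq 0 k) (seq_NoDup _ _)) as [a [b [Ha [Hb [Hab Hag]]]]].
  { rewrite length_seq. unfold k. lia. }
  apply in_seq in Ha, Hb.
  assert (Hz : exists x, Zr k a b x w).
  { destruct (classic (w = a \/ w = b)) as [H|H].
    - exists (bigpt k 0). right. split; auto. apply bigpt_A.
    - exists (3 * INR w). left. split; [auto|]. split; [intro; subst; auto|]. split; [intro; subst; auto|]. unfold inI; lra. }
  destruct Hz as [x Hz].
  apply (bisim N k a b V ltac:(lia) ltac:(lia) Hab Hag f Hocc x w Hz).
  apply sat_satK. apply Hf.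
Qed.


Fixpoint maxvar (f : form) : nat :=
  match f with Var m => m | Bot => 0 | Imp a b => Nat.max (maxvar a) (maxvar b) | Dia a => maxvar a end.

Lemma occurs_maxvar : forall n f, occurs n f -> (n <= maxvar f)%nat.
Proof. induction f; simpl; intros H; try tauto; try lia. destruct H; [apply IHf1 in H|apply IHf2 in H]; lia. Qed.

Fixpoint maxl (l : list form) : nat :=
  match l with nil => 0 | f :: l' => Nat.max (maxvar f) (maxl l') end.

Lemma maxl_in : forall l f, In f l -> (maxvar f <= maxl l)%nat.
Proof. induction l; simpl; intros f H; [tauto|]. destruct H; [subst; lia|]. apply IHl in H; lia. Qed.

Theorem part1 : forall Phi : form -> Prop,
     (forall f, KPlus Phi f <-> LogR f) -> infinitely_many_vars Phi.
Proof.
  intros Phi Heq [N HN]. set (k := (2 ^ N + 1)%nat).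
  assert (Hs : forall f, KPlus Phi f -> forall V w, (w < k)%nat -> satK (RelK k) V w f).
  { apply sound_K. intros f Hf V w Hw. apply K_valid; auto.
    - apply Heq. apply KP_ax; auto.
    - intros n Hn. apply HN. exists f; auto. }
  assert (Ht : KPlus Phi (theta k)) by (apply Heq; apply theta_valid).
  pose (V0 := fun (i w : nat) => w = i).
  assert (Hk : (0 < k)%nat) by (unfold k; lia).
  pose proof (Hs _ Ht V0 0%nat Hk) as H. unfold theta in H.
  assert (HD : forall y z, RelK k y z -> (z < k)%nat) by (intros y z [_ Hz]; auto).
  apply (chain_elim (RelK k) V0 0%nat k).
  - intros i Hi. apply (Aall_intro _ _ (fun z => (z < k)%nat)); auto.
    intros z Hz. simpl. intros Hzi [w' [[Hne _] Hw']]. unfold V0 in *. congruence.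
  - apply H. apply (Aall_intro _ _ (fun z => (z < k)%nat)); auto.
    intros z Hz. apply (bigOr_intro _ _ _ _ z); auto. reflexivity.
Qed.

Theorem part2 : ~ finitely_axiomatizable LogR.
Proof.
  intros [l Hl]. apply (part1 (fun g => In g l) Hl).
  exists (S (maxl l)). intros n [f [Hf Ho]].
  apply occurs_maxvar in Ho. apply maxl_in in Hf. lia.
Qed.

Theorem proposition5p1 :
  (forall Phi : form -> Prop,
     (forall f, KPlus Phi f <-> LogR f) -> infinitely_many_vars Phi)
  /\ ~ finitely_axiomatizable LogR.
Proof. exact (conj part1 part2). Qed.
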